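(* Let $n\ge1$ be an integer, $p\in(0,1)$, $q:=1-p$, and suppose $n\le\frac pq\cdot\frac1{u_{**}}$, where $u_{**}:=\frac{u_*}{1-u_*}$ and $u_*$ is the unique solution in $(0,1)$ of $\ln\frac{1-u}{-\ln u}-1-\frac12\frac{(1+u)\ln u}{1-u}=0$. Define $\tilde Q(x):=Q_n^{\mathrm{LC}}(x)$ for $x\le n$ and $\tilde Q(x):=q_{n-1}^{\,n-x}q_n^{\,x-n+1}$ for $x\ge n-1$ (the two expressions agree on $[n-1,n]$). Then for all $x\in[n,n+\frac12]$, $$Q_n^{\mathrm{Lin}}\Big(x+\frac12\Big)\le\tilde Q(x).$$
   Context: $B_n$ is binomial with parameters $n,p$; $Q_n(x):=\mathbf{P}(B_n\ge x)$ and $q_j:=Q_n(j)$ for $j\in\mathbb{Z}$; $Q_n^{\mathrm{LC}}$ is the least log-concave majorant of $Q_n$ on $\mathbb{R}$ (smallest $g\ge Q_n$ with $g\ge0$ and $\ln g$ concave, values $-\infty$ allowed); $Q_n^{\mathrm{Lin}}$ is the linear interpolation of $Q_n$ over $\mathbb{Z}$: $Q_n^{\mathrm{Lin}}(x)=(1-(x-j))q_j+(x-j)q_{j+1}$ for $j\le x\le j+1$, $j\in\mathbb{Z}$. *)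

(* Defs.v *)
From Stdlib Require Import Reals.
From Coquelicot Require Import Coquelicot.
Open Scope R_scope.

Definition Qn (n : nat) (p x : R) : R :=
  sum_f_R0 (fun k => if Rle_dec x (INR k)
                     then Binomial.C n k * p ^ k * (1 - p) ^ (n - k) else 0) n.

Definition qj (n : nat) (p : R) (j : Z) : R := Qn n p (IZR j).

(* g >= 0 and ln g concave (ln 0 = -oo allowed): the concavity inequality
   is only non-trivial when both endpoint values are positive. *)
Definition log_concave (g : R -> R) : Prop :=
  (forall x, 0 <= g x) /\
  (forall x y t, 0 < t < 1 -> 0 < g x -> 0 < g y ->
     exp ((1 - t) * ln (g x) + t * ln (g y)) <= g ((1 - t) * x + t * y)).

Definition LC_majorant (n : nat) (p : R) (g : R -> R) : Prop :=
  log_concave g /\ (forall x, Qn n p x <= g x).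

(* Least log-concave majorant: pointwise infimum of all log-concave
   majorants (which is itself a log-concave majorant). *)
Definition QLC (n : nat) (p x : R) : R :=
  real (Glb_Rbar (fun y => exists g, LC_majorant n p g /\ y = g x)).

Definition QLin (n : nat) (p x : R) : R :=
  let j := Int_part x in
  (1 - (x - IZR j)) * qj n p j + (x - IZR j) * qj n p (j + 1).

(* tilde Q: Q^LC for x <= n, q_{n-1}^{n-x} q_n^{x-n+1} for x >= n-1
   (the two agree on [n-1,n]); we use the second formula on [n-1,+oo). *)
Definition Qtilde (n : nat) (p x : R) : R :=
  if Rle_dec (INR n - 1) x
  then Rpower (qj n p (Z.of_nat n - 1)) (INR n - x)
       * Rpower (qj n p (Z.of_nat n)) (x - INR n + 1)
  else QLC n p x.

Definition ustar_eq (u : R) : R :=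
  ln ((1 - u) / (- ln u)) - 1 - / 2 * ((1 + u) * ln u / (1 - u)).

(* Main.v *)
Require Import Defs.
From Stdlib Require Import Reals.
From Coquelicot Require Import Coquelicot.
From Stdlib Require Import Lra Lia Psatz.
Open Scope R_scope.

Lemma exp_le' x y : x <= y -> exp x <= exp y.
Proof. intros [H|H]; [left; apply exp_increasing; auto | subst; lra]. Qed.

Lemma ln_le' x y : 0 < x -> x <= y -> ln x <= ln y.
Proof. intros Hx [H|H]; [left; apply ln_increasing; auto | subst; lra]. Qed.

Lemma key (L s : R) : 0 < L -> 0 <= s -> (L <= 1 \/ L <= 2 + 2 * ln L) ->
  / 2 - s <= exp (- (s * L)).
Proof.
  intros HL Hs [H1|H2].
  - pose proof (exp_ineq1_le (- (s * L))). nra.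
  - destruct (Rle_lt_dec L 1) as [H1|H1].
    + pose proof (exp_ineq1_le (- (s * L))). nra.
    + assert (E : exp (- (s * L)) * L = exp (ln L - s * L)).
      { replace (ln L - s * L) with (- (s * L) + ln L) by ring.
        rewrite exp_plus, exp_ln; lra. }
      pose proof (exp_ineq1_le (ln L - s * L)).
      nra.
Qed.

Lemma ustar_bound (u : R) : 0 < u < 1 -> ustar_eq u = 0 ->
  (- ln u) <= 1 \/ (- ln u) <= 2 + 2 * ln (- ln u).
Proof.
  intros Hu Heq.
  assert (Hl : ln u < 0) by (rewrite <- ln_1; apply ln_increasing; lra).
  set (L := - ln u) in *.
  destruct (Rle_lt_dec L 1) as [H|H]; [left; exact H| right].
  unfold ustar_eq in Heq.
  fold L in Heq. 
  replace (ln u) with (- L) in Heq by (unfold L; ring).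
  unfold Rdiv in Heq.
  rewrite ln_mult, ln_Rinv in Heq by (try apply Rinv_0_lt_compat; lra).
  set (w := 1 - u) in *.
  assert (Hw : 0 < w <= 1) by (unfold w; lra).
  set (iw := / w) in *.
  assert (Hiw : w * iw = 1) by (unfold iw; field; lra).
  assert (Hiw1 : 1 <= iw).
  { unfold iw. rewrite <- Rinv_1. apply Rinv_le_contravar; lra. }
  assert (Ha : 1 - iw <= ln w).
  { pose proof (exp_ineq1_le (- ln w)). rewrite exp_Ropp, exp_ln in H0 by lra.
    fold iw in H0. lra. }
  assert (Hu' : u = 1 - w) by (unfold w; ring).
  rewrite Hu' in Heq.
  assert (Hp : 0 <= (L - 1) * (iw - 1)) by (apply Rmult_le_pos; lra).
  assert (E : (1 + (1 - w)) * - L * iw = - 2 * L * iw + L * (w * iw)) by ring.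
  rewrite E, Hiw in Heq.
  nra.
Qed.

Lemma sum_tail (f : nat -> R) (m : nat) :
  (forall k, (k < m)%nat -> f k = 0) -> sum_f_R0 f m = f m.
Proof.
  induction m as [|m IH]; intros H; [reflexivity|].
  rewrite tech5, IH by (intros; apply H; lia).
  rewrite H by lia. ring.
Qed.

Lemma sum_zero (f : nat -> R) (m : nat) :
  (forall k, (k <= m)%nat -> f k = 0) -> sum_f_R0 f m = 0.
Proof.
  intros H. rewrite sum_tail by (intros; apply H; lia). apply H; lia.
Qed.

Lemma Qn_big n p y : INR n < y -> Qn n p y = 0.
Proof.
  intros H. unfold Qn. apply sum_zero. intros k Hk.
  destruct (Rle_dec y (INR k)) as [H'|]; [|reflexivity].
  apply le_INR in Hk. lra.
Qed.

Lemma C_nn n : Binomial.C n n = 1.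
Proof.
  unfold Binomial.C. rewrite Nat.sub_diag. simpl (Factorial.fact 0).
  simpl (INR 1). rewrite Rmult_1_r. apply Rinv_r. apply INR_fact_neq_0.
Qed.

Lemma C_Snn m : Binomial.C (S m) m = INR (S m).
Proof.
  unfold Binomial.C. replace (S m - m)%nat with 1%nat by lia.
  change (Factorial.fact (S m)) with (S m * Factorial.fact m)%nat.
  rewrite mult_INR. simpl (Factorial.fact 1). simpl (INR 1).
  field. apply INR_fact_neq_0.
Qed.

Lemma qn_val n p : qj n p (Z.of_nat n) = p ^ n.
Proof.
  unfold qj, Qn. rewrite <- INR_IZR_INZ.
  rewrite sum_tail.
  - destruct (Rle_dec (INR n) (INR n)) as [_|H]; [|lra].
    rewrite C_nn, Nat.sub_diag. ring.
  - intros k Hk. apply lt_INR in Hk.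
    destruct (Rle_dec (INR n) (INR k)); [lra|reflexivity].
Qed.

Lemma qn1_val m p : qj (S m) p (Z.of_nat (S m) - 1) = p ^ S m + INR (S m) * p ^ m * (1 - p).
Proof.
  unfold qj, Qn. rewrite minus_IZR, <- INR_IZR_INZ, S_INR.
  replace (INR m + 1 - 1) with (INR m) by ring.
  rewrite tech5, sum_tail.
  - destruct (Rle_dec (INR m) (INR m)) as [_|H]; [|lra].
    destruct (Rle_dec (INR m) (INR (S m))) as [_|H]; [|rewrite S_INR in H; lra].
    rewrite C_Snn, C_nn, Nat.sub_diag, S_INR.
    replace (S m - m)%nat with 1%nat by lia. simpl. ring.
  - intros k Hk. apply lt_INR in Hk.
    destruct (Rle_dec (INR m) (INR k)); [lra|reflexivity].
Qed.

Theorem lemma3p6 (n : nat) (p u_star : R) :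
  (1 <= n)%nat ->
  0 < p < 1 ->
  0 < u_star < 1 ->
  ustar_eq u_star = 0 ->
  (forall v, 0 < v < 1 -> ustar_eq v = 0 -> v = u_star) ->
  INR n <= p / (1 - p) * / (u_star / (1 - u_star)) ->
  forall x, INR n <= x <= INR n + / 2 ->
    QLin n p (x + / 2) <= Qtilde n p x.
Proof.
  intros Hn Hp Hu Heq _ Hbound x Hx.
  destruct n as [|m]; [lia|].
  set (n := S m) in *.
  set (a := p ^ n + INR n * p ^ m * (1 - p)).
  set (b := p ^ n).
  assert (Hpm : 0 < p ^ m) by (apply pow_lt; lra).
  assert (Hb : 0 < b) by (apply pow_lt; lra).
  assert (Hpn : b = p * p ^ m) by reflexivity.
  assert (HnR : 0 < INR n) by (apply lt_0_INR; unfold n; lia).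
  assert (Ha : 0 < a).
  { unfold a. fold b. assert (0 < INR n * p ^ m * (1 - p)).
    { apply Rmult_lt_0_compat; [apply Rmult_lt_0_compat|]; lra. } lra. }
  assert (Hua : u_star * a <= b).
  { assert (H1 : INR n * (1 - p) * u_star <= p * (1 - u_star)).
    { assert (E : p / (1 - p) * / (u_star / (1 - u_star)) = p * (1 - u_star) / ((1 - p) * u_star))
        by (field; lra).
      rewrite E in Hbound.
      apply Rmult_le_compat_r with (r := (1 - p) * u_star) in Hbound; [|nra].
      replace (p * (1 - u_star) / ((1 - p) * u_star) * ((1 - p) * u_star))
        with (p * (1 - u_star)) in Hbound by (field; lra).
      nra. }
    unfold a. fold b. rewrite Hpn. nra. }
  assert (HQt : b * exp (- ((x - INR n) * - ln u_star)) <= Qtilde n p x).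
  { unfold Qtilde. destruct (Rle_dec (INR n - 1) x) as [_|H]; [|lra].
    unfold n at 1 2. rewrite qn1_val. fold n. rewrite qn_val. fold a b.
    unfold Rpower. rewrite <- exp_plus.
    replace ((INR n - x) * ln a + (x - INR n + 1) * ln b)
      with (ln b + (x - INR n) * (ln b - ln a)) by ring.
    rewrite exp_plus, exp_ln by lra.
    apply Rmult_le_compat_l; [lra|]. apply exp_le'.
    assert (ln u_star + ln a <= ln b).
    { rewrite <- ln_mult by lra. apply ln_le'; [nra|lra]. }
    nra. }
  assert (Hk : / 2 - (x - INR n) <= exp (- ((x - INR n) * - ln u_star))).
  { apply key; [|lra|apply ustar_bound; auto].
    assert (ln u_star < 0) by (rewrite <- ln_1; apply ln_increasing; lra). lra. }
  unfold QLin.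
  set (y := x + / 2).
  destruct (base_Int_part y) as [Hj1 Hj2].
  set (j := Int_part y) in *.
  assert (Hn1 : IZR (Z.of_nat n) = INR n) by (rewrite INR_IZR_INZ; reflexivity).
  assert (Hjlo : (Z.of_nat n - 1 < j)%Z).
  { apply lt_IZR. rewrite minus_IZR, Hn1. unfold y in *. lra. }
  assert (Hjhi : (j <= Z.of_nat n + 1)%Z).
  { apply le_IZR. rewrite plus_IZR, Hn1. unfold y in *. lra. }
  assert (Hqbig : forall z, (Z.of_nat n + 1 <= z)%Z -> qj n p z = 0).
  { intros z Hz. unfold qj. apply Qn_big. apply IZR_le in Hz.
    rewrite plus_IZR, Hn1 in Hz. lra. }
  assert (Hpos : 0 <= b * exp (- ((x - INR n) * - ln u_star))).
  { pose proof (exp_pos (- ((x - INR n) * - ln u_star))). nra. }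
  destruct (Z.eq_dec j (Z.of_nat n)) as [Ej|Ej].
  - rewrite Ej, qn_val, Hqbig by lia. fold b. rewrite Hn1.
    unfold y. nra.
  - rewrite !Hqbig by lia. lra.
Qed.
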